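(* In the depth-3 instance with the shadow distribution described below, for $m$ sufficiently large, for every event $\mathcal E$ of the form $\{e_1\in A\}$ or $\{e_1\notin A\}$ with $e_1\in E$ and $\mathbb P[\mathcal E]>0$, and for every vertex $v$, we have $\mathbb E[|\delta^+(v)\cap A|\mid\mathcal E]\ge\Omega(1/m^4)\cdot\mathbb E[|\delta^+(v)\cap A'|\mid\mathcal E]$, where $|\delta^+(v)\cap A'|$ counts edges of $\delta^+(v)$ with their multiplicity in $A'$.
   Context: Depth-3 instance: fix a small constant $\rho>0$ and a large integer $m$ with $\rho m\in\mathbb N$, ground set $[m]$. Layers: $L_0=\{s\}$; $L_1$ has one vertex $u$ for each $S_u\subseteq[m]$ with $|S_u|=\rho m$; $L_2$ one vertex for each subset of size $2\rho m$; $L_3$ (the sinks) one vertex for each subset of size $\rho m$. Edges: $s$ to every vertex of $L_1$; $(u,v)$, $u\in L_1,v\in L_2$, iff $S_u\subseteq S_v$; $(u,v)$, $u\in L_2,v\in L_3$, iff $S_v\subseteq S_u$. For $e=(u,v)$ write $S_e=S_v$ and $e\in L_i$ if $v\in L_i$; $D(e)$ is the set of edges $(a,b)$ with $a$ reachable (possibly trivially) from the endpoint of $e$. $x_e=\binom{(1-\rho)m}{\rho m}^{-1}$ for $e\in L_1\cup L_3$ and $x_e=\binom{(1-\rho)m}{\rho m}^{-1}\binom{2\rho m}{\rho m}^{-1}$ for $e\in L_2$. Subtree solutions: for $e\in L_1$, $x^{(e)}_{e'}=1$ if $e'=e$; $\binom{2\rho m}{\rho m}^{-1}$ if $e'\in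 L_2\cap D(e)$; $\frac{\binom{(1-\rho)m}{\rho m}}{\binom{m}{\rho m}}\binom{m-2\rho m+|S_{e'}\cap S_e|}{|S_{e'}\cap S_e|}^{-1}$ if $e'\in L_3\cap D(e)$; $0$ otherwise. For $e\in L_2$: $x^{(e)}_{e'}=1$ if $e'=e$ or $e'\in L_3\cap D(e)$, else $0$. For $e\in L_3$: $x^{(e)}_{e'}=1$ iff $e'=e$. Shadow distribution: random $S$ containing each edge $e$ independently with probability $x_e$; for each $e\in S$ independently a random $S_e$ containing each edge $e'$ independently with probability $x^{(e)}_{e'}$; $A=\bigcup_{e\in S}S_e$, and $A'$ is the multiset union of the $S_e$, $e\in S$ (an edge appears in $A'$ as many times as the number of $e\in S$ with that edge in $S_e$). *)

(* Defs.v *)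
From HB Require Import structures.
From mathcomp Require Import all_boot all_order all_algebra.
Set Implicit Arguments. Unset Strict Implicit. Unset Printing Implicit Defensive.
Import Order.TTheory GRing.Theory Num.Theory.
Local Open Scope ring_scope.

(* A vertex is a pair (layer, subset of [m]); only "valid" pairs are vertices. *)
Definition Vtx (m : nat) := ('I_4 * {set 'I_m})%type.
Definition Edg (m : nat) := (Vtx m * Vtx m)%type.

Section Inst.
Variables (m k : nat).

(* k = rho*m.  L0 = {(0,set0)} = {s}; L1: k-sets; L2: 2k-sets; L3: k-sets. *)
Definition valid (v : Vtx m) : bool :=
  match nat_of_ord v.1 with
  | 0 => v.2 == set0
  | 1 => #|v.2| == k
  | 2 => #|v.2| == k.*2
  | _ => #|v.2| == k
  end.

Definition adj : rel (Vtx m) := fun a b =>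
  [&& valid a, valid b &
   [|| ((a.1 : nat) == 0%N) && ((b.1 : nat) == 1%N),
       [&& (a.1 : nat) == 1%N, (b.1 : nat) == 2%N & a.2 \subset b.2]
     | [&& (a.1 : nat) == 2%N, (b.1 : nat) == 3%N & b.2 \subset a.2]]].

Definition isE (e : Edg m) : bool := adj e.1 e.2.

Definition elayer (e : Edg m) : nat := e.2.1.

Definition Sof (e : Edg m) : {set 'I_m} := e.2.2.

Definition Dset (e : Edg m) : pred (Edg m) :=
  fun e' => isE e' && connect adj e.2 e'.1.

Variable R : realFieldType.

Definition xw (e : Edg m) : R :=
  if isE e then
    (if elayer e == 2%N then ('C(m - k, k)%:R * 'C(k.*2, k)%:R)^-1
     else ('C(m - k, k)%:R)^-1)
  else 0.

Definition xs (e e' : Edg m) : R :=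
  if ~~ (isE e && isE e') then 0
  else if e' == e then 1
  else if elayer e == 1%N then
    (if Dset e e' then
       (if elayer e' == 2%N then ('C(k.*2, k)%:R)^-1
        else if elayer e' == 3%N then
          let j := #|Sof e' :&: Sof e| in
          'C(m - k, k)%:R / 'C(m, k)%:R / 'C(m - k.*2 + j, j)%:R
        else 0)
     else 0)
  else if elayer e == 2%N then
    (if Dset e e' && (elayer e' == 3%N) then 1 else 0)
  else 0.

(* Outcomes: the set S and, for every edge e, the set S_e (the S_e with
   e \notin S are sampled too but are irrelevant; this gives the same
   joint law of (S, (S_e)_{e in S})). *)
Definition Omega := ({set Edg m} * {ffun Edg m -> {set Edg m}})%type.

Definition weight (om : Omega) : R :=
  (\prod_(e : Edg m) (if e \in om.1 then xw e else 1 - xw e)) *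
  \prod_(e : Edg m) \prod_(e' : Edg m)
     (if e' \in om.2 e then xs e e' else 1 - xs e e').

Definition Aset (om : Omega) : {set Edg m} := \bigcup_(e in om.1) om.2 e.

Definition multA' (om : Omega) (e' : Edg m) : nat :=
  #|[set e in om.1 | e' \in om.2 e]|.

Definition cntA (v : Vtx m) (om : Omega) : nat :=
  #|[set e' in Aset om | isE e' && (e'.1 == v)]|.
Definition cntA' (v : Vtx m) (om : Omega) : nat :=
  (\sum_(e' : Edg m | isE e' && (e'.1 == v)) multA' om e')%N.

Definition event (e1 : Edg m) (b : bool) (om : Omega) : bool :=
  (e1 \in Aset om) == b.

Definition Prob (ev : Omega -> bool) : R :=
  \sum_(om : Omega) weight om * (ev om)%:R.

Definition CondE (X : Omega -> nat) (ev : Omega -> bool) : R :=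
  (\sum_(om : Omega) weight om * (X om)%:R * (ev om)%:R) / Prob ev.

End Inst.

(* Main.v *)
Require Import Defs.
From mathcomp Require Import all_boot all_order all_algebra.
From mathcomp Require Import ring lra zify.
Set Implicit Arguments. Unset Strict Implicit. Unset Printing Implicit Defensive.
Import Order.TTheory GRing.Theory Num.Theory.


Lemma bin_le_exp2 n k : 'C(n, k) <= 2 ^ n.
Proof.
elim: n k => [|n IH] [|k].
- by [].
- by rewrite bin0n.
- by rewrite bin0 expn_gt0.
- by rewrite binS expnS mul2n -addnn leq_add.
Qed.

Lemma ffact_mono c a b j : 1 <= c -> c * b <= a -> c ^ j * b ^_ j <= a ^_ j.
Proof.
move=> c1 cab; elim: j => [|j IH]; first by rewrite expn0 !ffactn0.
rewrite !ffactnSr expnS.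
rewrite (_ : c * c ^ j * (b ^_ j * (b - j)) = (c ^ j * b ^_ j) * (c * (b - j))); last first.
  by ring.
apply: leq_mul => //; nia.
Qed.

Lemma bin_ratio k : 9 ^ k * 'C(k.*2, k) <= 'C(19 * k, k).
Proof.
rewrite -(leq_pmul2r (fact_gt0 k)) -mulnA !bin_ffact.
apply: ffact_mono => //; lia.
Qed.

Lemma exp_ineq (k : nat) : 4 <= k -> 12 * 4 ^ k <= 9 ^ k.
Proof.
elim: k => [|k IH] //; rewrite leq_eqVlt => /orP [/eqP <-|]; first by [].
move=> /IH h; rewrite !expnS; nia.
Qed.

Lemma num_bound m k : 4 <= k -> 20 * k <= m ->
  2 * ('C(k.*2, k) + 1) * ('C(k.*2, k).*2 + 1) <= 'C(m - k, k).
Proof.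
move=> k4 km.
set C := 'C(k.*2, k).
have C1 : 1 <= C by rewrite bin_gt0; lia.
have C4 : C <= 4 ^ k by apply: leq_trans (bin_le_exp2 _ _) _; rewrite -mul2n expnM.
have h1 : 'C(19 * k, k) <= 'C(m - k, k) by apply: leq_bin2l; lia.
have h2 := bin_ratio k; rewrite -/C in h2.
have h3 := @exp_ineq k k4.
apply: leq_trans h1; apply: leq_trans h2.
apply: (@leq_trans (12 * 4 ^ k * C)); last by rewrite leq_mul2r h3 orbT.
apply: (@leq_trans (12 * C * C)); last by rewrite leq_mul2r leq_mul2l C4 !orbT.
nia.
Qed.

Section Graph.
Variables (m k : nat).

Lemma adj_layer (a b : Vtx m) : adj k a b ->
  [/\ valid k a, valid k b, (b.1 : nat) = (a.1 : nat).+1,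
      ((a.1 : nat) = 1 -> a.2 \subset b.2) &
      ((a.1 : nat) = 2 -> b.2 \subset a.2)].
Proof.
case/and3P => va vb /or3P [/andP[/eqP h1 /eqP h2]|/and3P[/eqP h1 /eqP h2 s]|/and3P[/eqP h1 /eqP h2 s]];
  split => //; rewrite ?h1 ?h2 //.
Qed.

Lemma reach (a c : Vtx m) : connect (adj k) a c -> c = a \/
  ((a.1 : nat) < c.1 /\ ((a.1 : nat) = 1 -> (c.1 : nat) = 2 -> a.2 \subset c.2)).
Proof.
move/connectP => [p Hp ->].
pose P := fun c : Vtx m => c = a \/
  ((a.1 : nat) < c.1 /\ ((a.1 : nat) = 1 -> (c.1 : nat) = 2 -> a.2 \subset c.2)).
have gen : forall x q, path (adj k) x q -> P x -> P (last x q).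
  move=> x q; elim: q x => [|y q IH] x /=; first by [].
  case/andP => /adj_layer [_ _ hy h1 h2] hp Px; apply: IH => //.
  case: Px => [ex|[lt imp]].
    right; subst x; split; first by lia.
    by move=> ea _; apply: h1.
  right; split; first by lia.
  by move=> ea ey; exfalso; lia.
by apply: gen => //; left.
Qed.


Lemma validE (v : Vtx m) : valid k v ->
  [/\ (v.1 : nat) = 0 -> v.2 = set0, (v.1 : nat) = 1 -> #|v.2| = k,
      (v.1 : nat) = 2 -> #|v.2| = k.*2 & (v.1 : nat) = 3 -> #|v.2| = k].
Proof.
case: v => [[[|[|[|[|n]]]] Hn] S]; rewrite /valid /= => /eqP H; split => // h; lia.
Qed.

Lemma ord_eq (a : 'I_4) (n : nat) : (a : nat) = n -> a = inord n.
Proof. by move=> h; apply: val_inj; rewrite /= inordK // -h. Qed.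

Lemma L1_shape (g : Edg m) : isE k g -> elayer g = 1 ->
  g = ((inord 0, set0), (inord 1, g.2.2)) /\ #|g.2.2| = k.
Proof.
move=> /adj_layer [v1 v2 l _ _]; rewrite /elayer => e.
have [h0 _ _ _] := validE v1; have [_ h1 _ _] := validE v2.
clear v1 v2; move: g l e h0 h1 => [[a A] [b B]] /= l e h0 h1.
split; last exact: h1.
by rewrite -(ord_eq e) -(ord_eq (a := a) (n := 0)) ?h0 //; lia.
Qed.

Lemma L2_shape (g : Edg m) : isE k g -> elayer g = 2 ->
  [/\ g = ((inord 1, g.1.2), g.2), #|g.1.2| = k, g.1.2 \subset g.2.2 &
      #|g.2.2| = k.*2].
Proof.
move=> /adj_layer [v1 v2 l s1 _]; rewrite /elayer => e.
have [_ h1 _ _] := validE v1; have [_ _ h2 _] := validE v2.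
clear v1 v2; move: g l e h1 h2 s1 => [[a A] [b B]] /= l e h1 h2 s1.
have ea : (a : nat) = 1 by lia.
split; [|exact: h1|exact: s1|exact: h2].
by rewrite -(ord_eq ea).
Qed.

Lemma L3_shape (g : Edg m) : isE k g -> elayer g = 3 ->
  [/\ g = (g.1, (inord 3, g.2.2)), (g.1.1 : nat) = 2, #|g.2.2| = k,
      g.2.2 \subset g.1.2 & #|g.1.2| = k.*2].
Proof.
move=> /adj_layer [v1 v2 l _ s2]; rewrite /elayer => e.
have [_ _ h1 _] := validE v1; have [_ _ _ h2] := validE v2.
clear v1 v2; move: g l e h1 h2 s2 => [[a A] [b B]] /= l e h1 h2 s2.
have ea : (a : nat) = 2 by lia.
split; [|exact: ea|exact: h2|exact: s2|exact: h1].
by rewrite -(ord_eq e).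
Qed.

Lemma isE_head_le3 (g : Edg m) : isE k g -> (0 < elayer g)%N /\ (g.1.1 <= 2)%N.
Proof.
move=> /adj_layer [_ _ l _ _]; rewrite /elayer l; split => //.
have := ltn_ord g.2.1; rewrite l; lia.
Qed.

Variable R : realFieldType.
Local Open Scope ring_scope.

Lemma xs_cases (g e' : Edg m) : xs k R g e' != 0 ->
  [/\ isE k g, isE k e' &
   g = e' \/ (g != e' /\ ((elayer g = 1%N /\ Dset k g e') \/
              (elayer g = 2%N /\ Dset k g e' /\ elayer e' = 3%N)))].
Proof.
rewrite /xs; case: ifP => [_|/negbFE /andP[hg he]]; first by rewrite eqxx.
case: (eqVneq e' g) => [<-|ne]; first by move=> _; split => //; left.
case: ifP => [/eqP l1|l1].
  by case: ifP => [D|D]; rewrite ?eqxx // => _; split => //; right; split => //; left.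
case: ifP => [/eqP l2|l2] //.
case: ifP => [/andP[D /eqP l3]|]; rewrite ?eqxx // => _.
  by split => //; right; split => //; right.
by rewrite eqxx.
Qed.

Local Open Scope nat_scope.

Lemma Contr_bound (e' : Edg m) : isE k e' ->
  #|[set g | xs k R g e' != 0%R]| <=
    1 + 'C(#|e'.1.2|, k) + (elayer e' == 3) * 'C(k.*2, k).
Proof.
move=> he'.
have [va vb l12 s1 s2] := adj_layer he'.
set X := e'.1.2.
pose P1 := [set g | (xs k R g e' != 0%R) && (g != e') && (elayer g == 1)].
pose P2 := [set g | (xs k R g e' != 0%R) && (g != e') && (elayer g == 2)].
have sub : [set g | xs k R g e' != 0%R] \subset [set e'] :|: P1 :|: P2.
  apply/subsetP => g; rewrite !inE => /[dup] nz /xs_cases [_ _ [->|[ne [[l _]|[l _]]]]].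
  - by rewrite eqxx.
  - by rewrite nz ne l orbT.
  - by rewrite nz ne l !orbT.
have c1 : #|P1| <= 'C(#|X|, k).
  pose f := fun B : {set 'I_m} => ((inord 0 : 'I_4, set0 : {set 'I_m}), (inord 1 : 'I_4, B)) : Edg m.
  rewrite -cards_draws; apply: leq_trans (leq_imset_card f _).
  apply: subset_leq_card; apply/subsetP => g; rewrite inE => /andP[/andP[nz ne] /eqP l].
  case: (xs_cases nz) => hg _ [E|[_ [[_ D]|[l2 _]]]]; [by rewrite E eqxx in ne | | by rewrite l in l2].
  have [Eg cg] := L1_shape hg l.
  apply/imsetP; exists g.2.2 => //.
  rewrite inE cg eqxx andbT.
  move: D => /andP[_ /reach [E|[lt imp]]]; first by rewrite /X E.
  have [_ le2] := isE_head_le3 he'.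
  move: l lt; rewrite /elayer => l lt.
  by apply: imp; [exact: l | lia].
have c2 : #|P2| <= (elayer e' == 3) * 'C(k.*2, k).
  case: (eqVneq (elayer e') 3) => l3; last first.
    rewrite mul0n leqn0 cards_eq0; apply/eqP/setP => g; rewrite !inE.
    apply/negbTE; apply/negP => /andP[/andP[nz ne] /eqP l].
    case: (xs_cases nz) => _ _ [E|[_ [[l1 _]|[_ [_ l3']]]]];
      [by rewrite E eqxx in ne | by rewrite l in l1 | by rewrite l3' eqxx in l3].
  rewrite mul1n.
  pose f2 := fun B : {set 'I_m} => ((inord 1 : 'I_4, B), e'.1) : Edg m.
  have [_ _ _ _ cX] := L3_shape he' l3.
  rewrite -cX -cards_draws; apply: leq_trans (leq_imset_card f2 _).
  apply: subset_leq_card; apply/subsetP => g; rewrite inE => /andP[/andP[nz ne] /eqP l].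
  case: (xs_cases nz) => hg _ [E|[_ [[l1 _]|[_ [D _]]]]];
    [by rewrite E eqxx in ne | by rewrite l in l1 | ].
  have [Eg cg sg _] := L2_shape hg l.
  move: D => /andP[_ /reach [E|[lt _]]]; last first.
    have [_ le2] := isE_head_le3 he'; move: l lt; rewrite /elayer; lia.
  apply/imsetP; exists g.1.2; last by rewrite {1}Eg /f2 E.
  by rewrite inE cg eqxx andbT /X E.
apply: leq_trans (subset_leq_card sub) _.
apply: leq_trans (leq_card_setU _ _) _.
have := (leq_card_setU [set e'] P1).1; rewrite cards1 => h.
move: c1 c2 h; rewrite /X; lia.
Qed.


End Graph.

Section Main.
Variables (m k : nat) (R : realFieldType).
Local Open Scope ring_scope.

Lemma invn_ge0 (n : nat) : 0 <= (n%:R : R)^-1.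
Proof. by rewrite invr_ge0 ler0n. Qed.

Lemma invn_le1 (n : nat) : (n%:R : R)^-1 <= 1.
Proof.
case: n => [|n]; first by rewrite invr0 ler01.
by rewrite invf_le1 ?ltr0Sn // ler1n.
Qed.

Definition x0 : R := ('C(m - k, k)%:R)^-1.

Lemma xw_ge0 (e : Edg m) : 0 <= xw k R e.
Proof.
rewrite /xw; case: (isE k e) => //; case: ifP => _; rewrite ?invn_ge0 //.
by rewrite -natrM invn_ge0.
Qed.

Lemma xw_le_x0 (e : Edg m) : xw k R e <= x0.
Proof.
rewrite /xw /x0; case: (isE k e); last by rewrite invn_ge0.
case: ifP => _ //; rewrite invfM.
rewrite -[X in _ <= X]mulr1 ler_wpM2l ?invn_ge0 ?invn_le1 //.
Qed.

Lemma x0_le1 : x0 <= 1. Proof. exact: invn_le1. Qed.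

Lemma xw_le1 (e : Edg m) : xw k R e <= 1.
Proof. exact: le_trans (xw_le_x0 e) x0_le1. Qed.

Lemma xs_ge0 (e e' : Edg m) : 0 <= xs k R e e'.
Proof.
rewrite /xs; case: ifP => _ //; case: ifP => _ //; case: ifP => _.
  case: ifP => _ //; case: ifP => _; rewrite ?invn_ge0 //.
  by case: ifP => _ //; rewrite !divr_ge0 ?ler0n.
by case: ifP => _ //; case: ifP => _.
Qed.

Lemma xs_le1 (e e' : Edg m) : xs k R e e' <= 1.
Proof.
rewrite /xs; case: ifP => _ //; case: ifP => _ //; case: ifP => _.
  case: ifP => _ //; case: ifP => _; rewrite ?invn_le1 //.
  case: ifP => _ //.
  set j := #|_|.
  have h1 : ('C(m - k, k)%:R : R) / 'C(m, k)%:R <= 1.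
    case: (posnP 'C(m, k)) => [->|Hp]; first by rewrite invr0 mulr0 ler01.
    rewrite ler_pdivrMr ?ltr0n // mul1r ler_nat; apply: leq_bin2l; exact: leq_subr.
  apply: le_trans h1.
  rewrite -[X in _ <= X]mulr1 ler_wpM2l ?invn_le1 ?divr_ge0 ?ler0n //.
by case: ifP => _ //; case: ifP => _.
Qed.

Lemma weight_ge0 (om : Omega m) : 0 <= weight k R om.
Proof.
rewrite /weight mulr_ge0 //; apply: prodr_ge0 => e _.
  by case: ifP => _; rewrite ?xw_ge0 ?subr_ge0 ?xw_le1.
apply: prodr_ge0 => e' _.
by case: ifP => _; rewrite ?xs_ge0 ?subr_ge0 ?xs_le1.
Qed.

Lemma supp_xw (om : Omega m) e : weight k R om != 0 -> e \in om.1 -> xw k R e != 0.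
Proof.
rewrite /weight mulf_eq0 negb_or => /andP[/prodf_neq0 H _] he.
by have := H e isT; rewrite he.
Qed.

Lemma supp_xs (om : Omega m) e e' : weight k R om != 0 -> e' \in om.2 e -> xs k R e e' != 0.
Proof.
rewrite /weight mulf_eq0 negb_or => /andP[_ /prodf_neq0 H] he.
by have /prodf_neq0 H2 := H e isT; have := H2 e' isT; rewrite he.
Qed.

Lemma xs_isE (e e' : Edg m) : xs k R e e' != 0 -> isE k e && isE k e'.
Proof. by rewrite /xs; case: (isE k e && isE k e') => //; rewrite eqxx. Qed.

Lemma xw_isE (e : Edg m) : xw k R e != 0 -> isE k e.
Proof. by rewrite /xw; case: (isE k e) => //; rewrite eqxx. Qed.


Definition togS (g : Edg m) (S : {set Edg m}) := if g \in S then S :\ g else g |: S.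
Definition tog (g : Edg m) (om : Omega m) : Omega m := (togS g om.1, om.2).

Lemma in_togS g S e : (e \in togS g S) = (if e == g then g \notin S else e \in S).
Proof.
rewrite /togS; case: ifP => H; rewrite ?inE; case: eqP => [->|] //=; rewrite ?eqxx ?H //.
Qed.

Lemma togK g : involutive (tog g).
Proof.
move=> [S f]; rewrite /tog /=; congr (_, _); apply/setP => e.
by rewrite !in_togS; case: eqP => [->|//]; rewrite eqxx negbK.
Qed.

Definition wS (e : Edg m) (b : bool) : R := if b then xw k R e else 1 - xw k R e.

Lemma weight_split g (om : Omega m) : weight k R om =
  wS g (g \in om.1) * ((\prod_(e | e != g) wS e (e \in om.1)) *
  \prod_(e : Edg m) \prod_(e' : Edg m)
     (if e' \in om.2 e then xs k R e e' else 1 - xs k R e e')).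
Proof. by rewrite /weight (bigD1 g) //= mulrA. Qed.

Lemma clear1 g (F : Omega m -> R) : (forall om, F (tog g om) = F om) ->
  \sum_(om : Omega m) weight k R om * F om * (g \notin om.1)%:R =
  (1 - xw k R g) * \sum_(om : Omega m) weight k R om * F om.
Proof.
move=> HF.
pose r (om : Omega m) := ((\prod_(e | e != g) wS e (e \in om.1)) *
  \prod_(e : Edg m) \prod_(e' : Edg m)
     (if e' \in om.2 e then xs k R e e' else 1 - xs k R e e')) * F om.
have rT om : r (tog g om) = r om.
  rewrite /r HF; congr (_ * _ * _); apply: eq_bigr => e ne.
  by rewrite /tog /= in_togS (negbTE ne).
have E1 : \sum_(om : Omega m | g \in om.1) r om = \sum_(om : Omega m | g \notin om.1) r om.
  rewrite (reindex_inj (can_inj (togK g))) /=.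
  by apply: eq_big => om; rewrite ?in_togS ?eqxx ?rT.
have wr om : weight k R om * F om = wS g (g \in om.1) * r om.
  by rewrite (weight_split g) /r !mulrA.
under eq_bigr do rewrite wr.
have L : \sum_(i : Omega m) wS g (g \in i.1) * r i * (g \notin i.1)%:R =
    (1 - xw k R g) * \sum_(i : Omega m | g \notin i.1) r i.
  rewrite (bigID (fun om : Omega m => g \in om.1)) /= big1 ?add0r ?mulr_sumr.
    by apply: eq_bigr => i /negbTE H; rewrite /wS H mulr1 mulrC.
  by move=> i H; rewrite H mulr0.
have T : \sum_(i : Omega m) wS g (g \in i.1) * r i = \sum_(i : Omega m | g \notin i.1) r i.
  rewrite (bigID (fun om : Omega m => g \in om.1)) /=.
  have -> : \sum_(i : Omega m | g \in i.1) wS g (g \in i.1) * r i =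
     xw k R g * \sum_(i : Omega m | g \in i.1) r i.
    by rewrite mulr_sumr; apply: eq_bigr => i H; rewrite /wS H.
  have -> : \sum_(i : Omega m | g \notin i.1) wS g (g \in i.1) * r i =
     (1 - xw k R g) * \sum_(i : Omega m | g \notin i.1) r i.
    by rewrite mulr_sumr; apply: eq_bigr => i /negbTE H; rewrite /wS H.
  by rewrite E1 -mulrDl addrCA subrr addr0 mul1r.
by rewrite L -T; congr (_ * _); apply: eq_bigr => i _; rewrite wr.
Qed.


Definition Ex (f : Omega m -> R) := \sum_(om : Omega m) weight k R om * f om.

Lemma all_tog g (om : Omega m) (s : seq (Edg m)) : g \notin s ->
  all (fun g0 => g0 \notin (tog g om).1) s = all (fun g0 => g0 \notin om.1) s.
Proof.
elim: s => //= a s IH; rewrite inE negb_or => /andP[ne ns].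
by rewrite IH // /tog /= in_togS eq_sym (negbTE ne).
Qed.

Lemma clear_seq (s : seq (Edg m)) (F : Omega m -> R) : uniq s ->
  (forall g om, g \in s -> F (tog g om) = F om) ->
  Ex (fun om => F om * (all (fun g => g \notin om.1) s)%:R) =
  (\prod_(g <- s) (1 - xw k R g)) * Ex F.
Proof.
elim: s F => [|g s IH] F /=.
  by move=> _ _; rewrite big_nil mul1r /Ex; apply: eq_bigr => om _; rewrite mulr1.
move=> /andP[gs us] HF.
rewrite big_cons -mulrA -IH //; last by move=> g' om H; apply: HF; rewrite inE H orbT.
rewrite /Ex -clear1.
  by apply: eq_bigr => om _; rewrite -mulnb natrM; ring.
move=> om; rewrite HF ?inE ?eqxx //; congr (_ * _%:R).
by rewrite all_tog.
Qed.

Lemma prod_ge (s : seq (Edg m)) :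
  1 - \sum_(g <- s) xw k R g <= \prod_(g <- s) (1 - xw k R g).
Proof.
elim: s => [|g s IH]; first by rewrite !big_nil subr0.
rewrite !big_cons.
have h0 := xw_ge0 g; have h1 := xw_le1 g.
have hs : 0 <= \sum_(j <- s) xw k R j by apply: sumr_ge0 => *; exact: xw_ge0.
nra.
Qed.

Definition Qd (D : {set Edg m}) (om : Omega m) : bool :=
  all (fun g => g \notin om.1) (enum D).

Lemma clearD (D : {set Edg m}) (F : Omega m -> R) :
  (forall g om, g \in D -> F (tog g om) = F om) -> 0 <= Ex F ->
  (1 - \sum_(g in D) xw k R g) * Ex F <= Ex (fun om => F om * (Qd D om)%:R).
Proof.
move=> HF H0; rewrite /Qd clear_seq ?enum_uniq //; last first.
  by move=> g om; rewrite mem_enum; apply: HF.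
by rewrite ler_wpM2r // -big_enum prod_ge.
Qed.


Lemma sum_sub_le (A B : {set Edg m}) (F : Edg m -> R) : A \subset B ->
  (forall i, 0 <= F i) -> \sum_(i in A) F i <= \sum_(i in B) F i.
Proof.
move=> /subsetP sAB F0; rewrite [X in _ <= X]big_mkcond [X in X <= _]big_mkcond /=.
apply: ler_sum => i _; case: ifP => iA; first by rewrite sAB.
by case: ifP.
Qed.

Lemma Ex_le (f g : Omega m -> R) :
  (forall om, weight k R om != 0 -> f om <= g om) -> Ex f <= Ex g.
Proof.
move=> H; apply: ler_sum => om _.
case: (eqVneq (weight k R om) 0) => [->|nz]; first by rewrite !mul0r.
by rewrite ler_wpM2l ?weight_ge0 ?H.
Qed.

Lemma Ex_ge0 (f : Omega m -> R) : (forall om, 0 <= f om) -> 0 <= Ex f.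
Proof. by move=> H; apply: sumr_ge0 => om _; rewrite mulr_ge0 ?weight_ge0. Qed.

Lemma ExD (f g : Omega m -> R) : Ex (fun om => f om + g om) = Ex f + Ex g.
Proof. by rewrite /Ex -big_split /=; apply: eq_bigr => om _; rewrite mulrDr. Qed.

Lemma ExZ c (f : Omega m -> R) : Ex (fun om => c * f om) = c * Ex f.
Proof. by rewrite /Ex mulr_sumr; apply: eq_bigr => om _; rewrite mulrCA. Qed.

Lemma Ex_sum (I : finType) (P : pred I) (F : I -> Omega m -> R) :
  Ex (fun om => \sum_(i | P i) F i om) = \sum_(i | P i) Ex (F i).
Proof.
rewrite /Ex exchange_big /=; apply: eq_bigr => om _; exact: mulr_sumr.
Qed.

Lemma Ex_ext (f g : Omega m -> R) : (forall om, f om = g om) -> Ex f = Ex g.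
Proof. by move=> H; apply: eq_bigr => om _; rewrite H. Qed.

Lemma doubling (D H : {set Edg m}) (F : Omega m -> R) : D \subset H ->
  \sum_(g in H) xw k R g <= 1/2 -> (forall om, 0 <= F om) ->
  (forall g om, g \in D -> F (tog g om) = F om) ->
  Ex F <= 2 * Ex (fun om => F om * (Qd D om)%:R).
Proof.
move=> sDH hH F0 HF.
have E0 := Ex_ge0 F0.
have c := clearD HF E0.
have sD := sum_sub_le sDH (fun g => xw_ge0 g).
set d := \sum_(g in D) _ in c sD.
have hd : d <= 1/2 by apply: le_trans sD hH.
have h : Ex F <= 2 * ((1 - d) * Ex F) by nra.
apply: le_trans h _; rewrite ler_pM2l //.
Qed.


Lemma card_sum (T : finType) (p : pred T) : #|[set x | p x]| = (\sum_(x : T) p x)%N.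
Proof. by rewrite -sum1dep_card big_mkcond /=; apply: eq_bigr => x _; case: (p x). Qed.

Lemma card_sumS (T : finType) (A : {set T}) : #|A| = (\sum_(x : T) (x \in A))%N.
Proof. by rewrite -sum1_card big_mkcond /=; apply: eq_bigr => x _; case: (x \in A). Qed.

Lemma in_Aset (om : Omega m) h e' : h \in om.1 -> e' \in om.2 h -> e' \in Aset om.
Proof. by move=> hS hin; rewrite /Aset; apply/bigcupP; exists h. Qed.

Lemma in_AsetP (om : Omega m) e' : e' \in Aset om -> exists2 h, h \in om.1 & e' \in om.2 h.
Proof. by rewrite /Aset => /bigcupP. Qed.

Section Core.
Variables (v : Vtx m) (e1 : Edg m) (b : bool).

Definition Ev := [set e' : Edg m | isE k e' && (e'.1 == v)].
Definition Hs := \bigcup_(e' in e1 |: Ev) [set g | xs k R g e' != 0].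
Definition sI (h : Edg m) (om : Omega m) : R := (h \in om.1)%:R.
Definition Yn (h : Edg m) (om : Omega m) : nat := #|[set e' in Ev | e' \in om.2 h]|.

Lemma cntAdE (om : Omega m) : cntA' k v om = (\sum_h (h \in om.1) * Yn h om)%N.
Proof.
rewrite /cntA' /multA'.
transitivity (\sum_(e' | isE k e' && (e'.1 == v)) \sum_(e : Edg m) ((e \in om.1) && (e' \in om.2 e)))%N.
  apply: eq_bigr => e' _; apply: (etrans (card_sumS _)); apply: eq_bigr => e _.
  by rewrite inE.
rewrite exchange_big /=; apply: eq_bigr => h _.
rewrite /Yn.
apply: (etrans _ (esym (f_equal (muln _) (card_sumS _)))).
rewrite big_distrr /= [LHS]big_mkcond /=.
apply: eq_bigr => e' _; rewrite !inE.
by case: (h \in om.1); case: (isE k e' && (e'.1 == v)); case: (e' \in om.2 h).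
Qed.

Lemma Yn_le h (om : Omega m) : h \in om.1 -> (Yn h om <= cntA k v om)%N.
Proof.
move=> hS; rewrite /Yn /cntA; apply: subset_leq_card; apply/subsetP => e'.
rewrite !inE => /andP[/andP[he ev] hin]; rewrite he ev !andbT.
exact: in_Aset hin.
Qed.

Lemma in_Hs g e' : e' \in e1 |: Ev -> xs k R g e' != 0 -> g \in Hs.
Proof. by move=> he nz; apply/bigcupP; exists e' => //; rewrite inE. Qed.

Lemma Yn_supp h (om : Omega m) : weight k R om != 0 -> h \notin Hs -> Yn h om = 0%N.
Proof.
move=> nz hH; apply/eqP; rewrite cards_eq0; apply/eqP/setP => e'; rewrite !inE.
apply/negbTE/negP => /andP[he hin]; move/negP: hH; apply.
by apply: (in_Hs (e' := e')); [rewrite !inE he orbT | exact: supp_xs hin].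
Qed.


Lemma QdE (D : {set Edg m}) (om : Omega m) : Qd D om = (om.1 :&: D == set0).
Proof.
rewrite /Qd; apply/allP/eqP => [H | H].
  apply/setP => g; rewrite !inE; apply/negbTE/negP => /andP[gS gD].
  by have := H g; rewrite mem_enum gD gS => /(_ isT).
move=> g; rewrite mem_enum => gD; apply/negP => gS.
have : g \in om.1 :&: D by rewrite inE gS gD.
by rewrite H inE.
Qed.

Lemma cardR (P : {set Edg m}) : (#|P|%:R : R) = \sum_(g : Edg m) ((g \in P)%:R : R).
Proof. by rewrite -natr_sum; congr (_%:R); apply: card_sumS. Qed.

Lemma ch_le (h : Edg m) (om : Omega m) :
  (Qd (Hs :\ h) om)%:R + \sum_(g in Hs :\ h) sI g om * (Qd (Hs :\ h :\ g) om)%:R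
  <= ((#|om.1 :&: (Hs :\ h)| <= 1)%N)%:R.
Proof.
set P := om.1 :&: (Hs :\ h).
have t : forall g, g \in Hs :\ h -> sI g om * (Qd (Hs :\ h :\ g) om)%:R <=
          (g \in P)%:R * ((#|P| <= 1)%N)%:R.
  move=> g gD; rewrite /sI QdE.
  case gS: (g \in om.1); last by rewrite mul0r mulr_ge0 ?ler0n.
  have gP : g \in P by rewrite inE gS gD.
  rewrite gP -!natrM ler_nat mul1n.
  case: eqP => E //=.
  have sP : P \subset [set g].
    apply/subsetP => x xP; rewrite inE; apply/negPn/negP => xg.
    have : x \in om.1 :&: (Hs :\ h :\ g).
      by move: xP; rewrite !inE xg => /andP[-> /andP[-> ->]].
    by rewrite E inE.
  by have := subset_leq_card sP; rewrite cards1 => ->.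
have S1 : \sum_(g in Hs :\ h) sI g om * (Qd (Hs :\ h :\ g) om)%:R <=
    \sum_(g in Hs :\ h) (g \in P)%:R * ((#|P| <= 1)%N)%:R by apply: ler_sum.
have S2 : \sum_(g in Hs :\ h) ((g \in P)%:R : R) <= #|P|%:R.
  rewrite cardR [X in _ <= X](bigID (fun g => g \in Hs :\ h)) /= lerDl.
  by apply: sumr_ge0 => *; rewrite ler0n.
apply: le_trans (lerD (lexx _) S1) _.
rewrite -mulr_suml.
apply: le_trans (lerD (lexx _) (ler_wpM2r (ler0n _ _) S2)) _.
rewrite QdE -/P -natrM -natrD ler_nat.
case: (eqVneq P set0) => [->|nP]; first by rewrite cards0.
have : (0 < #|P|)%N by rewrite card_gt0.
case: (leqP #|P| 1) => h1 h0 /=; last by rewrite muln0.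
by have -> : #|P| = 1%N by lia.
Qed.


Ltac simpR := rewrite /= ?mulr1n ?mulr0n ?mulr0 ?mul0r ?mulr1 ?mul1r ?addr0 ?add0r.

Definition F0 h (om : Omega m) : R := sI h om * (Yn h om)%:R.
Definition cterm h (om : Omega m) : R := (Qd (Hs :\ h) om)%:R +
  \sum_(g in Hs :\ h) sI g om * (Qd (Hs :\ h :\ g) om)%:R.

Lemma sI_ge0 g om : 0 <= sI g om. Proof. by rewrite ler0n. Qed.
Lemma F0_ge0 h om : 0 <= F0 h om. Proof. by rewrite mulr_ge0 ?sI_ge0 ?ler0n. Qed.
Lemma cterm_ge0 h om : 0 <= cterm h om.
Proof. by rewrite addr_ge0 ?ler0n // sumr_ge0 // => g _; rewrite mulr_ge0 ?sI_ge0 ?ler0n. Qed.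

Lemma sI_tog g h om : g != h -> sI h (tog g om) = sI h om.
Proof. by move=> gh; rewrite /sI /tog /= in_togS eq_sym (negbTE gh). Qed.

Lemma F0_tog g h om : g != h -> F0 h (tog g om) = F0 h om.
Proof. by move=> gh; rewrite /F0 sI_tog. Qed.

Lemma noA h (om : Omega m) : weight k R om != 0 -> e1 \notin om.2 h ->
  Qd (Hs :\ h) om -> e1 \notin Aset om.
Proof.
move=> nz hin; rewrite QdE => /eqP E; apply/negP => /in_AsetP [g gS gin].
have gH : g \in Hs by apply: (in_Hs (e' := e1)); [rewrite setU11 | exact: supp_xs gin].
have gh : g != h by apply/eqP => gh; rewrite -gh gin in hin.
have : g \in om.1 :&: (Hs :\ h) by rewrite !inE gS gH gh.
by rewrite E inE.
Qed.

Lemma main_h h : \sum_(g in Hs) xw k R g <= 1/2 ->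
  Ex (fun om => F0 h om * (event e1 b om)%:R) <=
  2 * Ex (fun om => F0 h om * (event e1 b om)%:R * cterm h om).
Proof.
move=> hd.
have sub1 : Hs :\ h \subset Hs by apply: subD1set.
case: b.
- pose G1 om := F0 h om * (e1 \in om.2 h)%:R.
  pose G2 g om := F0 h om * (e1 \notin om.2 h)%:R * sI g om * (e1 \in om.2 g)%:R.
  have S1 : Ex (fun om => F0 h om * (event e1 true om)%:R) <=
            Ex G1 + \sum_(g in Hs :\ h) Ex (G2 g).
    rewrite -Ex_sum -ExD; apply: Ex_le => om nz; rewrite /G1 /G2 /event.
    case hin: (e1 \in om.2 h).
      rewrite big1 => [|g _]; last by simpR.
      by rewrite addr0; case: (_ == true); simpR; rewrite ?F0_ge0 ?lexx.
    simpR.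
    case hA: (e1 \in Aset om); simpR; last first.
      by apply: sumr_ge0 => *; rewrite !mulr_ge0 ?F0_ge0 ?ler0n.
    have [g gS gin] := in_AsetP hA.
    have gH : g \in Hs by apply: (in_Hs (e' := e1)); [rewrite setU11 | exact: supp_xs gin].
    have gh : g != h by apply/eqP => gh; rewrite -gh gin in hin.
    have gD : g \in Hs :\ h by rewrite !inE gh gH.
    rewrite (bigD1 g gD) /= /sI gS gin; simpR.
    rewrite lerDl; apply: sumr_ge0 => g' _; rewrite !mulr_ge0 ?F0_ge0 ?ler0n //.
  have S2 : Ex G1 <= 2 * Ex (fun om => F0 h om * (event e1 true om)%:R *
                                       (Qd (Hs :\ h) om)%:R).
    apply: le_trans (doubling sub1 hd _ _) _.
    - by move=> om; rewrite /G1 mulr_ge0 ?F0_ge0 ?ler0n.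
    - by move=> g om; rewrite !inE => /andP[gh _]; rewrite /G1 F0_tog.
    rewrite ler_pM2l //; apply: Ex_le => om nz; rewrite /G1 /event.
    case hin: (e1 \in om.2 h); simpR; last by rewrite !mulr_ge0 ?F0_ge0 ?ler0n.
    rewrite /F0 /sI; case hS: (h \in om.1); simpR => //.
    by rewrite (in_Aset hS hin); simpR.
  have S3 : forall g, g \in Hs :\ h -> Ex (G2 g) <=
     2 * Ex (fun om => F0 h om * (event e1 true om)%:R * (sI g om * (Qd (Hs :\ h :\ g) om)%:R)).
    move=> g gD.
    have sub2 : Hs :\ h :\ g \subset Hs.
      by apply: subset_trans sub1; apply: subD1set.
    apply: le_trans (doubling sub2 hd _ _) _.
    - by move=> om; rewrite /G2 !mulr_ge0 ?F0_ge0 ?ler0n.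
    - move=> g' om; rewrite !inE => /andP[g'g /andP[g'h _]].
      by rewrite /G2 F0_tog // sI_tog.
    rewrite ler_pM2l //; apply: Ex_le => om nz; rewrite /G2 /event.
    rewrite /sI; case gS: (g \in om.1); simpR; last by rewrite !mulr_ge0 ?F0_ge0 ?ler0n.
    case gin: (e1 \in om.2 g); simpR; last by rewrite !mulr_ge0 ?F0_ge0 ?ler0n.
    rewrite (in_Aset gS gin); simpR.
    rewrite ler_wpM2r ?ler0n //.
    by case: (e1 \in om.2 h); simpR; rewrite ?F0_ge0 ?lexx.
  apply: le_trans S1 _.
  have S3' : \sum_(g in Hs :\ h) Ex (G2 g) <= \sum_(g in Hs :\ h)
     2 * Ex (fun om => F0 h om * (event e1 true om)%:R * (sI g om * (Qd (Hs :\ h :\ g) om)%:R)).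
    by apply: ler_sum.
  apply: le_trans (lerD S2 S3') _.
  rewrite -mulr_sumr -mulrDr ler_pM2l // -Ex_sum -ExD.
  apply: Ex_le => om _; rewrite /cterm mulrDr mulr_sumr.
  by [].
- pose G om := F0 h om * (e1 \notin om.2 h)%:R.
  have S1 : Ex (fun om => F0 h om * (event e1 false om)%:R) <= Ex G.
    apply: Ex_le => om nz; rewrite /G /event.
    case hin: (e1 \in om.2 h); last first.
      by simpR; case: (_ == false); simpR; rewrite ?F0_ge0 ?lexx.
    simpR; rewrite /F0 /sI; case hS: (h \in om.1); simpR => //.
    by rewrite (in_Aset hS hin); simpR.
  have S2 : Ex G <= 2 * Ex (fun om => G om * (Qd (Hs :\ h) om)%:R).
    apply: doubling sub1 hd _ _.
      by move=> om; rewrite /G mulr_ge0 ?F0_ge0 ?ler0n.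
    by move=> g om; rewrite !inE => /andP[gh _]; rewrite /G F0_tog.
  apply: le_trans S1 _; apply: le_trans S2 _; rewrite ler_pM2l //.
  apply: Ex_le => om nz; rewrite /G /event.
  case hin: (e1 \in om.2 h); simpR.
    by rewrite !mulr_ge0 ?F0_ge0 ?ler0n ?cterm_ge0.
  case q: (Qd (Hs :\ h) om); simpR; last by rewrite !mulr_ge0 ?F0_ge0 ?ler0n ?cterm_ge0.
  rewrite (negbTE (noA nz (negbT hin) q)) /=; simpR.
  rewrite /cterm q; simpR.
  rewrite ler_peMr ?F0_ge0 // lerDl.
  by apply: sumr_ge0 => g _; rewrite mulr_ge0 ?sI_ge0 ?ler0n.
Qed.


Lemma natfact (y C a c : nat) : (y <= C)%N -> a = (1 + c)%N ->
  (y * (c <= 1) <= C * (a <= 2))%N.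
Proof.
move=> yC ->; case: (leqP c 1) => h; last by rewrite muln0.
have -> : (1 + c <= 2)%N by lia.
by rewrite !muln1.
Qed.

Lemma agg_pt (om : Omega m) : weight k R om != 0 ->
  \sum_h F0 h om * cterm h om <= 2 * (cntA k v om)%:R.
Proof.
move=> nz.
set P := om.1 :&: Hs.
have t : forall h, F0 h om * cterm h om <=
    (h \in P)%:R * (cntA k v om)%:R * ((#|P| <= 2)%N)%:R.
  move=> h; rewrite /F0 /sI.
  case hS: (h \in om.1); last by rewrite !inE hS; simpR.
  case hH: (h \in Hs); last by rewrite Yn_supp ?hH //; simpR; rewrite !mulr_ge0 ?ler0n.
  have hP : h \in P by rewrite !inE hS hH.
  rewrite hP; simpR.
  apply: le_trans (ler_wpM2l (ler0n _ _) (ch_le h om)) _.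
  have E : om.1 :&: (Hs :\ h) = P :\ h.
    by apply/setP => x; rewrite !inE; case: (x == h); case: (x \in om.1); case: (x \in Hs).
  rewrite E -!natrM ler_nat.
  have cP := cardsD1 h P; rewrite hP /= in cP.
  have Y := Yn_le hS.
  by apply: (natfact Y); exact: cP.
have S : \sum_h F0 h om * cterm h om <=
    \sum_h (h \in P)%:R * (cntA k v om)%:R * ((#|P| <= 2)%N)%:R by apply: ler_sum.
apply: le_trans S _.
rewrite -!mulr_suml -cardR.
case: (leqP #|P| 2) => h2; simpR; last by rewrite mulr_ge0 ?ler0n.
by rewrite ler_wpM2r ?ler0n // (ler_nat R #|P| 2).
Qed.

Lemma core_ratio : \sum_(g in Hs) xw k R g <= 1/2 ->
  Ex (fun om => (cntA' k v om)%:R * (event e1 b om)%:R) <=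
  4 * Ex (fun om => (cntA k v om)%:R * (event e1 b om)%:R).
Proof.
move=> hd.
have -> : Ex (fun om => (cntA' k v om)%:R * (event e1 b om)%:R) =
    \sum_h Ex (fun om => F0 h om * (event e1 b om)%:R).
  rewrite -Ex_sum; apply: Ex_ext => om.
  by rewrite cntAdE natr_sum mulr_suml; apply: eq_bigr => h _; rewrite natrM.
have S : \sum_h Ex (fun om => F0 h om * (event e1 b om)%:R) <=
    \sum_h 2 * Ex (fun om => F0 h om * (event e1 b om)%:R * cterm h om).
  by apply: ler_sum => h _; apply: main_h.
apply: le_trans S _.
rewrite -mulr_sumr -Ex_sum.
have T : Ex (fun om => \sum_h F0 h om * (event e1 b om)%:R * cterm h om) <=
    Ex (fun om => 2 * ((cntA k v om)%:R * (event e1 b om)%:R)).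
  apply: Ex_le => om nz.
  have -> : \sum_h F0 h om * (event e1 b om)%:R * cterm h om =
      (event e1 b om)%:R * \sum_h F0 h om * cterm h om.
    by rewrite mulr_sumr; apply: eq_bigr => h _; rewrite mulrAC mulrC.
  rewrite [X in _ <= X](_ : _ = (event e1 b om)%:R * (2 * (cntA k v om)%:R)); last by ring.
  rewrite ler_wpM2l ?ler0n //; exact: agg_pt.
rewrite ExZ in T.
have -> : (4 : R) = 2 * 2 by rewrite -natrM.
by rewrite -mulrA ler_pM2l.
Qed.


Local Open Scope nat_scope.

Lemma Ev_card : (v.1 : nat) = 2 -> valid k v -> #|Ev| <= 'C(k.*2, k).
Proof.
move=> v2 vv.
have [_ _ cv _] := validE vv; rewrite -(cv v2) -cards_draws.
pose f3 := fun B : {set 'I_m} => (v, (inord 3 : 'I_4, B)) : Edg m.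
apply: leq_trans (leq_imset_card f3 _).
apply: subset_leq_card; apply/subsetP => e'; rewrite inE => /andP[he /eqP ev].
have l3 : elayer e' = 3.
  by have [_ _ l _ _] := adj_layer he; rewrite /elayer l ev v2.
have [E _ c s _] := L3_shape he l3.
apply/imsetP; exists e'.2.2; last by rewrite {1}E /f3 ev.
by rewrite inE c eqxx andbT -ev s.
Qed.

Lemma Contr_le2 (e' : Edg m) : isE k e' ->
  #|[set g | xs k R g e' != 0%R]| <= 'C(k.*2, k).*2 + 1.
Proof.
move=> he; apply: leq_trans (Contr_bound R he) _.
have h1 : 'C(#|e'.1.2|, k) <= 'C(k.*2, k).
  apply: leq_bin2l.
  have [v1 _ _ _ _] := adj_layer he; have [_ le2] := isE_head_le3 he.
  have [c0 c1 c2 _] := validE v1.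
  move: le2; case: (e'.1.1 : nat) c0 c1 c2 => [|[|[|n]]] c0 c1 c2 le2 //.
  - by rewrite c0 // cards0.
  - by rewrite c1 // -addnn leq_addr.
  - by rewrite c2.
have h2 : (elayer e' == 3) * 'C(k.*2, k) <= 'C(k.*2, k).
  by case: (elayer e' == 3); rewrite ?mul1n ?mul0n.
lia.
Qed.

Local Open Scope ring_scope.

Lemma sum_bigcup_le (A : {set Edg m}) (B : Edg m -> {set Edg m}) (F : Edg m -> R) :
  (forall g, 0 <= F g) ->
  \sum_(g in \bigcup_(i in A) B i) F g <= \sum_(i in A) \sum_(g in B i) F g.
Proof.
move=> F0.
under [X in _ <= X]eq_bigr do rewrite big_mkcond /=.
rewrite exchange_big /= big_mkcond /=.
apply: ler_sum => g _.
case: ifP => gin; last by apply: sumr_ge0 => i _; case: ifP.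
have [i iA gi] := bigcupP gin.
rewrite (bigD1 i iA) /= gi lerDl.
by apply: sumr_ge0 => j _; case: ifP.
Qed.

Lemma delta_bound : (v.1 : nat) = 2%N -> valid k v -> isE k e1 ->
  \sum_(g in Hs) xw k R g <=
  ((('C(k.*2, k) + 1) * ('C(k.*2, k).*2 + 1))%N)%:R * x0.
Proof.
move=> v2 vv he1.
apply: le_trans (sum_bigcup_le _ _ (@xw_ge0)) _.
have t : forall e', e' \in e1 |: Ev ->
    \sum_(g in [set g | xs k R g e' != 0]) xw k R g <= ('C(k.*2, k).*2 + 1)%:R * x0.
  move=> e' he'.
  have hE : isE k e'.
    by move: he'; rewrite !inE => /orP[/eqP ->|/andP[]].
  apply: le_trans (ler_sum _ (fun g _ => xw_le_x0 g)) _.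
  rewrite sumr_const -[X in X <= _]mulr_natl ler_wpM2r ?invn_ge0 // ler_nat.
  exact: Contr_le2.
apply: le_trans (ler_sum _ t) _.
rewrite sumr_const -[X in X <= _]mulr_natl mulrA -natrM ler_wpM2r ?invn_ge0 // ler_nat.
rewrite leq_mul2r; apply/orP; right.
apply: leq_trans (leq_card_setU _ _).1 _.
by rewrite cards1 addnC leq_add2r; apply: Ev_card.
Qed.


Local Open Scope nat_scope.

Lemma pt_ratio (K : nat) (om : Omega m) : weight k R om != 0%R ->
  (forall e', e' \in Ev -> #|[set g | xs k R g e' != 0%R]| <= K) ->
  cntA' k v om <= K * cntA k v om.
Proof.
move=> nz hK.
have t : forall e', isE k e' && (e'.1 == v) ->
    multA' om e' <= K * (e' \in Aset om).
  move=> e' he'.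
  case hA: (e' \in Aset om); last first.
    rewrite muln0 leqn0 cards_eq0; apply/eqP/setP => e; rewrite !inE.
    apply/negbTE/negP => /andP[eS ein].
    by rewrite (in_Aset eS ein) in hA.
  rewrite muln1; apply: leq_trans (hK e' _); last by rewrite inE.
  apply: subset_leq_card; apply/subsetP => e; rewrite !inE => /andP[eS ein].
  exact: supp_xs ein.
have S : cntA' k v om <= \sum_(e' | isE k e' && (e'.1 == v)) K * (e' \in Aset om).
  by rewrite /cntA'; apply: leq_sum.
apply: leq_trans S _.
rewrite -big_distrr /= leq_mul2l; apply/orP; right.
rewrite /cntA; apply: eq_leq; apply: (etrans _ (esym (card_sumS _))).
rewrite big_mkcond /=; apply: eq_bigr => e' _; rewrite !inE.
by case: (isE k e' && (e'.1 == v)); case: (e' \in Aset om).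
Qed.

Lemma Kv_bound : valid k v -> forall e', e' \in Ev ->
  #|[set g | xs k R g e' != 0%R]| <= 1 + 'C(#|v.2|, k) + ((v.1 : nat) == 2) * 'C(k.*2, k).
Proof.
move=> vv e'; rewrite inE => /andP[he /eqP ev].
apply: leq_trans (Contr_bound R he) _.
have [_ _ l _ _] := adj_layer he.
by rewrite /elayer l ev eqSS.
Qed.

End Core.
End Main.

Local Open Scope ring_scope.

Lemma C_small (j : nat) : (j <= 3)%N -> ('C(j.*2, j) <= 20)%N.
Proof. by case: j => [|[|[|[|j]]]]. Qed.

Lemma ratio41 (R : realFieldType) (m k : nat) (v : Vtx m) (e1 : Edg m) (b : bool) :
  valid k v -> isE k e1 -> (20 * k <= m)%N ->
  Ex k (fun om : Omega m => (cntA' k v om)%:R * (event e1 b om)%:R :> R) <=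
  41 * Ex k (fun om : Omega m => (cntA k v om)%:R * (event e1 b om)%:R :> R).
Proof.
move=> vv he1 km.
have E0 : 0 <= Ex k (fun om : Omega m => (cntA k v om)%:R * (event e1 b om)%:R :> R).
  by apply: Ex_ge0 => om; rewrite mulr_ge0 ?ler0n.
case: (boolP (((v.1 : nat) == 2%N) && (4 <= k)%N)) => [/andP[/eqP v2 k4]|hn].
  apply: le_trans (core_ratio b _) _; last by rewrite ler_wpM2r // (ler_nat R 4 41).
  apply: le_trans (delta_bound R v2 vv he1) _.
  have nb := num_bound k4 km.
  rewrite /x0.
  set C := 'C(k.*2, k) in nb *.
  set N := 'C(m - k, k) in nb *.
  have Npos : (0 < N)%N by apply: leq_trans nb; rewrite !muln_gt0 !addn1.
  rewrite ler_pdivrMr ?ltr0n //.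
  have h : ((2 * ((C + 1) * (C.*2 + 1)))%N%:R : R) <= N%:R by rewrite ler_nat mulnA.
  rewrite natrM in h; lra.
rewrite -ExZ; apply: Ex_le => om nz.
rewrite mulrA [X in _ <= X * _](_ : _ = ((41 * cntA k v om)%N)%:R); last by rewrite natrM.
rewrite ler_wpM2r ?ler0n // ler_nat.
apply: pt_ratio nz _ => e' he'.
apply: leq_trans (Kv_bound R vv he') _.
have [c0 c1 c2 c3] := validE vv.
case: (eqVneq (v.1 : nat) 2%N) => v2.
  move: hn; rewrite v2 eqxx /= -ltnNge => k3.
  rewrite c2 // mul1n.
  have := C_small (j := k); lia.
rewrite mul0n addn0.
have hv : (#|v.2| <= k)%N.
  have := ltn_ord v.1; move: v2 c0 c1 c3.
  case: (v.1 : nat) => [|[|[|[|n]]]] v2 c0 c1 c3 // _.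
  - by rewrite c0 // cards0.
  - by rewrite c1.
  - by rewrite c3.
have : ('C(#|v.2|, k) <= 1)%N.
  case: (ltngtP #|v.2| k) => [lt|gt|->]; [by rewrite bin_small | by exfalso; lia | by rewrite binn].
lia.
Qed.

Theorem lemma6 (R : realFieldType) :
  exists rho0 : R, 0 < rho0 /\
  forall rho : R, 0 < rho < rho0 ->
  exists c : R, 0 < c /\
  exists M : nat,
  forall m k : nat, (M <= m)%N -> k%:R = rho * m%:R ->
  forall (e1 : Edg m), isE k e1 ->
  forall b : bool, 0 < Prob k R (event e1 b) ->
  forall v : Vtx m, valid k v ->
    CondE k R (cntA k v) (event e1 b) >=
    c / (m%:R ^+ 4) * CondE k R (cntA' k v) (event e1 b).
Proof.
exists (1/20); split; first by lra.
move=> rho /andP[r0 r1].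
exists (1/41); split; first by lra.
exists 1%N => m k Mm hk e1 he1 b hP v vv.
have mpos : 0 < (m%:R : R) by rewrite ltr0n.
have km : (20 * k <= m)%N.
  rewrite -(ler_nat R) natrM hk.
  have : rho * m%:R <= 1/20 * m%:R by rewrite ler_pM2r // ltW.
  lra.
have H := ratio41 R b vv he1 km.
rewrite /CondE.
set P := Prob k R (event e1 b) in hP *.
have eN : forall X : Omega m -> nat,
    \sum_(om : Omega m) weight k R om * (X om)%:R * (event e1 b om)%:R =
    Ex k (fun om => (X om)%:R * (event e1 b om)%:R).
  by move=> X; apply: eq_bigr => om _; rewrite mulrA.
rewrite !eN.
set N' := Ex k _ in H *.
set N := Ex k (fun om => (cntA k v om)%:R * _) in H *.
have N'0 : 0 <= N' by apply: Ex_ge0 => om; rewrite mulr_ge0 ?ler0n.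
have mf : 1 <= (m%:R : R) ^+ 4 by rewrite exprn_ege1 // ler1n.
set q' := N' / P; set q := N / P.
have q'0 : 0 <= q' by rewrite divr_ge0 // ltW.
have qq : q' <= 41 * q by rewrite /q' /q mulrA ler_pM2r ?invr_gt0.
have t0 : 0 < ((m%:R : R) ^+ 4)^-1 by rewrite invr_gt0; apply: lt_le_trans mf.
have t1 : ((m%:R : R) ^+ 4)^-1 <= 1 by rewrite invf_le1 // ; apply: lt_le_trans mf.
set t := (_ ^+ 4)^-1 in t0 t1.
rewrite /= mul1r -/t.
nra.
Qed.
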